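(* Let $m>0$ be a fixed integer and let $S$ be a monoid such that (i) $S$ satisfies $x^m\,y_1^2y_2^2\cdots y_n^2\,x\approx x^{m+1}\,y_1^2y_2^2\cdots y_n^2\,x$ for each $n>1$; (ii) for each $0<d<m+1$ and every identity $x^{m+1-d}tx^d\approx\mathbf v$ satisfied by $S$, the variable $x$ occurs exactly $m+1$ times in $\mathbf v$; (iii) for all $p,c>1$, every word $\mathbf w$ such that $S$ satisfies $x^py^c\approx\mathbf w$ is of the form $x^iy^j$ for some $i,j>1$. Then $S$ is non-finitely based.
   Context: All letters denote distinct variables of a countably infinite alphabet; words are elements of the free semigroup on it. A monoid $S$ satisfies an identity $\mathbf u\approx\mathbf v$ if both sides are equal under every evaluation of the variables in $S$. $S$ is finitely based if all its identities are derivable from a finite subset of them; otherwise non-finitely based. *)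

(* Defs.v *)
From mathcomp Require Import all_boot.
Set Implicit Arguments. Unset Strict Implicit. Unset Printing Implicit Defensive.

Record monoid := Monoid {
  carrier :> Type;
  mop : carrier -> carrier -> carrier;
  mone : carrier;
  mopA : forall a b c, mop a (mop b c) = mop (mop a b) c;
  mone_l : forall a, mop mone a = a;
  mone_r : forall a, mop a mone = a }.

Definition word := seq nat.
Definition identity := (word * word)%type.

Definition eval (S : monoid) (phi : nat -> S) (w : word) : S :=
  foldr (fun x acc => mop (phi x) acc) (mone S) w.

Definition satisfies (S : monoid) (u v : word) : Prop :=
  forall phi : nat -> S, eval phi u = eval phi v.

Definition subst (sigma : nat -> word) (w : word) : word :=
  flatten (map sigma w).

Inductive derivable (Sigma : seq identity) : word -> word -> Prop :=
  | der_refl u : derivable Sigma u u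
  | der_sym u v : derivable Sigma u v -> derivable Sigma v u
  | der_trans u v w : derivable Sigma u v -> derivable Sigma v w -> derivable Sigma u w
  | der_step (e : identity) (sigma : nat -> word) (a b : word) :
      e \in Sigma ->
      derivable Sigma (a ++ subst sigma e.1 ++ b) (a ++ subst sigma e.2 ++ b).

Definition finitely_based (S : monoid) : Prop :=
  exists Sigma : seq identity,
    (forall e, e \in Sigma -> satisfies S e.1 e.2) /\
    (forall u v : word, satisfies S u v -> derivable Sigma u v).

Definition non_finitely_based (S : monoid) : Prop := ~ finitely_based S.

(* y_1^2 y_2^2 ... y_n^2, with y_i the variable i (x is variable 0). *)
Definition ysq (n : nat) : word := flatten [seq [:: i; i] | i <- iota 1 n].

(* Main.v *)
Require Import Defs.
From mathcomp Require Import all_boot zify.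
Set Implicit Arguments. Unset Strict Implicit. Unset Printing Implicit Defensive.

Lemma eval_cat (S : monoid) (phi : nat -> S) s t :
  eval phi (s ++ t) = mop (eval phi s) (eval phi t).
Proof.
elim: s => [|x s IH] /=; first by rewrite mone_l.
by rewrite IH mopA.
Qed.

Lemma subst_cons sg z s : subst sg (z :: s) = sg z ++ subst sg s.
Proof. by []. Qed.

Lemma subst_cat sg s t : subst sg (s ++ t) = subst sg s ++ subst sg t.
Proof. by rewrite /subst map_cat flatten_cat. Qed.

Lemma eval_subst (S : monoid) (phi : nat -> S) sg s :
  eval phi (subst sg s) = eval (fun z => eval phi (sg z)) s.
Proof.
elim: s => [|x s IH] //=.
by rewrite subst_cons eval_cat IH.
Qed.

Lemma sat_refl S u : satisfies S u u. Proof. by []. Qed.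
Lemma sat_sym S u v : satisfies S u v -> satisfies S v u.
Proof. by move=> H phi; rewrite H. Qed.
Lemma sat_trans S u v w : satisfies S u v -> satisfies S v w -> satisfies S u w.
Proof. by move=> H1 H2 phi; rewrite H1 H2. Qed.
Lemma sat_cat S u v u' v' : satisfies S u v -> satisfies S u' v' ->
  satisfies S (u ++ u') (v ++ v').
Proof. by move=> H1 H2 phi; rewrite !eval_cat H1 H2. Qed.
Lemma sat_subst S u v sg : satisfies S u v -> satisfies S (subst sg u) (subst sg v).
Proof. by move=> H phi; rewrite !eval_subst H. Qed.

Lemma mem_subst sg s c : (c \in subst sg s) = has (fun z => c \in sg z) s.
Proof. elim: s => [|z s IH] //=; by rewrite subst_cons mem_cat IH. Qed.

Lemma count_subst (P : pred nat) sg s : count P (subst sg s) = sumn (map (fun z => count P (sg z)) s).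
Proof. elim: s => [|z s IH] //=; by rewrite subst_cons count_cat IH. Qed.

Lemma eq_in_subst s sg1 sg2 : {in s, sg1 =1 sg2} -> subst sg1 s = subst sg2 s.
Proof. by move=> H; rewrite /subst; congr flatten; apply/eq_in_map. Qed.

Definition before (a b : nat) (w : word) := a \notin drop (index b w) w.

Lemma before_split a b X Y : before a b (X ++ b :: Y) -> a \notin Y.
Proof.
rewrite /before index_cat.
case: ifP => [bX|bX].
  rewrite drop_cat index_mem bX mem_cat negb_or => /andP[_].
  by rewrite inE negb_or => /andP[].
rewrite /= eqxx addn0 drop_size_cat //=.
by rewrite inE negb_or => /andP[].
Qed.

Lemma beforeNb a b w : b \notin w -> before a b w.
Proof. by move=> H; rewrite /before memNindex // drop_size. Qed.

Lemma beforeNa a b w : a \notin w -> before a b w.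
Proof. by move=> H; apply/negP=> /mem_drop; apply/negP. Qed.

Lemma before_catl a b s t : before a b s -> a \notin t -> before a b (s ++ t).
Proof.
rewrite /before index_cat; case: ifP => bs.
  by rewrite drop_cat index_mem bs mem_cat negb_or => -> ->.
move=> _ at'. rewrite drop_cat ltnNge leq_addr /= addKn.
by apply/negP=> /mem_drop; apply/negP.
Qed.

Lemma before_catr a b s t : b \notin s -> before a b t -> before a b (s ++ t).
Proof.
move=> bs; rewrite /before index_cat (negbTE bs) drop_cat ltnNge leq_addr /= addKn //.
Qed.

Lemma before_suffix a b s t : before a b (s ++ t) -> before a b t.
Proof.
rewrite /before index_cat; case: ifP => bs.
  rewrite drop_cat index_mem bs mem_cat negb_or => /andP[_ H].
  by apply/negP=> /mem_drop; apply/negP.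
by rewrite drop_cat ltnNge leq_addr /= addKn.
Qed.

Lemma before_nseq i j : before 0 1 (nseq i 0 ++ nseq j 1).
Proof.
apply: before_catr; first by rewrite mem_nseq andbF.
by apply: beforeNa; rewrite mem_nseq andbF.
Qed.

Ltac szlia := repeat match goal with H : context [size _] |- _ => revert H end;
  repeat match goal with |- context [size ?s] => let k := fresh "k" in move: (size s) => k end; lia.

Definition Hiii (S : monoid) := forall p c, 1 < p -> 1 < c -> forall w : word,
     satisfies S (nseq p 0 ++ nseq c 1) w ->
     exists i j, [/\ 1 < i, 1 < j & w = nseq i 0 ++ nseq j 1].

Lemma Hiii_before S p c w : Hiii S -> 1 < p -> 1 < c ->
  satisfies S (nseq p 0 ++ nseq c 1) w -> before 0 1 w.
Proof. by move=> H hp hc hs; have [i [j [_ _ ->]]] := H p c hp hc w hs; apply: before_nseq. Qed.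

Lemma split_first (c : nat) V : c \in V -> exists X Y, V = X ++ c :: Y /\ c \notin X.
Proof.
move=> cV; exists (take (index c V) V), (drop (index c V).+1 V); split.
  by rewrite -{1}(cat_take_drop (index c V) V) (drop_nth 0) ?index_mem // nth_index.
by rewrite in_take // ltnn.
Qed.

Lemma subst_nil sg s : (forall z, z \in s -> sg z = [::]) -> subst sg s = [::].
Proof.
elim: s => [|z s IH] //= H; rewrite subst_cons H ?inE ?eqxx //= IH // => y ys.
by apply: H; rewrite inE ys orbT.
Qed.

Lemma content S U V c : Hiii S -> satisfies S U V -> c \in V -> c \in U.
Proof.
move=> H3 HUV cV; apply/negPn/negP => cU.
pose th := fun z => if z == c then [:: 0; 0; 1; 1] else [::].
have thU : subst th U = [::].
  apply: subst_nil => z zU; rewrite /th; case: eqP => // ez; subst z.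
  by rewrite zU in cU.
have [X [Y [EV cX]]] := split_first cV; subst V.
have thX : subst th X = [::].
  apply: subst_nil => z zX; rewrite /th; case: eqP => // ez; subst z.
  by rewrite zX in cX.
have := sat_cat (@sat_refl S [:: 0; 0; 1; 1]) (sat_subst th HUV).
rewrite thU subst_cat thX subst_cons /th eqxx /= => Hs.
have := Hiii_before (p:=2) (c:=2) H3 isT isT Hs.
have -> : [:: 0, 0, 1, 1, 0, 0, 1, 1 & subst th Y] = [:: 0; 0] ++ 1 :: [:: 1, 0, 0, 1, 1 & subst th Y] by [].
by move/before_split; rewrite !inE.
Qed.

Lemma subst_th_a a b s : b \notin s ->
  subst (fun z => if z == a then [:: 0; 0] else if z == b then [:: 1; 1] else [::]) s
  = nseq (count_mem a s * 2) 0.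
Proof.
elim: s => [|z s IH] //=; rewrite inE negb_or => /andP[bz bs].
rewrite subst_cons IH //; have [_|nza] := eqVneq z a.
  by rewrite add1n mulSn nseqD.
by rewrite eq_sym (negbTE bz) add0n.
Qed.

Lemma subst_th_b a b s : a \notin s ->
  subst (fun z => if z == a then [:: 0; 0] else if z == b then [:: 1; 1] else [::]) s
  = nseq (count_mem b s * 2) 1.
Proof.
elim: s => [|z s IH] //=; rewrite inE negb_or => /andP[az as'].
rewrite subst_cons IH // eq_sym (negbTE az); have [_|nzb] := eqVneq z b.
  by rewrite add1n mulSn nseqD.
by rewrite add0n.
Qed.

Lemma before_sat S U V a b : Hiii S -> a != b -> satisfies S U V ->
  before a b U -> before a b V.
Proof.
move=> H3 ab HUV bU.
have [aU|aU] := boolP (a \in U); last first.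
  by apply: beforeNa; apply/negP => /(content H3 HUV); apply/negP.
have [bU'|bU'] := boolP (b \in U); last first.
  by apply: beforeNb; apply/negP => /(content H3 HUV); apply/negP.
pose th := fun z => if z == a then [:: 0; 0] else if z == b then [:: 1; 1] else [::].
have thU : subst th U = nseq (count_mem a U * 2) 0 ++ nseq (count_mem b U * 2) 1.
  rewrite -{1}(cat_take_drop (index b U) U) subst_cat subst_th_a; last by rewrite in_take // ltnn.
  rewrite subst_th_b //.
  have ca : count_mem a (drop (index b U) U) = 0.
    by apply/eqP; rewrite -leqn0 leqNgt -has_count has_pred1.
  have cb : count_mem b (take (index b U) U) = 0.
    by apply/eqP; rewrite -leqn0 leqNgt -has_count has_pred1 in_take // ltnn.
  have ea : count_mem a U = count_mem a (take (index b U) U).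
    by rewrite -{1}(cat_take_drop (index b U) U) count_cat ca addn0.
  have eb : count_mem b U = count_mem b (drop (index b U) U).
    by rewrite -{1}(cat_take_drop (index b U) U) count_cat cb.
  by rewrite ea eb.
have Hs := sat_subst th HUV; rewrite thU in Hs.
have ca1 : 0 < count_mem a U by rewrite -has_count has_pred1.
have cb1 : 0 < count_mem b U by rewrite -has_count has_pred1.
have pa : 1 < count_mem a U * 2 by lia.
have pb : 1 < count_mem b U * 2 by lia.
have HV := Hiii_before H3 pa pb Hs.
apply/negP => aV.
have bV : b \in V.
  by apply/negPn/negP => nb; move: aV; rewrite memNindex // drop_size.
have [X [Y [EV bX]]] := split_first bV.
move: aV; rewrite EV /before index_cat (negbTE bX) /= eqxx addn0 drop_size_cat //.
rewrite inE (negbTE ab) /= => aY.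
move: HV; rewrite EV subst_cat subst_cons {2}/th (eq_sym b a) (negbTE ab) eqxx /=.
have -> : subst th X ++ [:: 1, 1 & subst th Y] = (subst th X ++ [:: 1]) ++ 1 :: subst th Y by rewrite -catA.
move/before_split; rewrite mem_subst; move/hasPn => /(_ a aY).
by rewrite /th eqxx.
Qed.

Definition ordw (w : word) := forall a b, 0 < a < b -> before a b w.

Definition Qw (m n : nat) (w : word) : Prop :=
  [/\ count_mem 0 w = m.+1,
      forall l, 0 < l <= n -> l \in w,
      ordw w &
      forall l, 0 < l <= n -> ~~ before l 0 w /\ ~~ before 0 l w].

Lemma mem_drop_le (x : nat) i j s : i <= j -> x \in drop j s -> x \in drop i s.
Proof.
move=> ij; rewrite -(subnK ij) -drop_drop => /mem_drop //.
Qed.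

Lemma nth_in_drop (s : word) k i : k <= i < size s -> nth 0 s i \in drop k s.
Proof.
move=> /andP[ki iS]; rewrite -(subnKC ki) -nth_drop; apply: mem_nth.
by rewrite size_drop; apply: ltn_sub2r => //; apply: leq_ltn_trans ki iS.
Qed.

Lemma twosided n w l : 1 < n -> 0 < l <= n -> ordw w ->
  (forall l, 0 < l <= n -> ~~ before l 0 w /\ ~~ before 0 l w) ->
  exists i, [/\ i < size w, nth 0 w i = l, 0 \in take i w & 0 \in drop i.+1 w].
Proof.
move=> n2 hl Hord H4.
have [H1a H1b] := H4 l hl.
move: H1a H1b; rewrite /before !negbK => H1a H1b.
have lw : l \in w by apply: mem_drop H1a.
have zw : 0 \in w by apply: mem_drop H1b.
set k0 := index 0 w in H1a.
set i1 := k0 + index l (drop k0 w).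
have i1s : i1 < size w.
  have := index_mem l (drop k0 w); rewrite H1a size_drop /i1; move: (index l (drop k0 w)) => j H; have {}H : j < size w - k0 by rewrite H. lia.
have ni1 : nth 0 w i1 = l by rewrite /i1 -nth_drop nth_index.
have k0s : k0 < size w by rewrite /k0 index_mem.
have zi1 : 0 \in take i1 w.
  rewrite in_take // /i1 -/k0 -[X in X < _]addn0 ltn_add2l lt0n.
  apply/negP => /eqP e.
  have : nth 0 (drop k0 w) (index l (drop k0 w)) = l by rewrite nth_index.
  rewrite e nth_drop addn0 /k0 nth_index //; move/eqP; rewrite eq_sym; lia.
set f := index l w.
have fs : f < size w by rewrite /f index_mem.
have nf : nth 0 w f = l by rewrite /f nth_index.
have zf : 0 \in drop f.+1 w.
  move: H1b; rewrite -/f (drop_nth 0 fs) nf inE; case: eqP => //= e; lia.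
have [zt|zt] := boolP (0 \in take f w).
  by exists f; split.
have [zd|zd] := boolP (0 \in drop i1.+1 w).
  by exists i1; split.
have fk0 : f <= k0.
  by move: zt; rewrite in_take // -leqNgt.
have ek0 : index 0 w = k0 by []. have ef : index l w = f by []. clearbody i1 f k0; exfalso.
have [l1|l1] := ltnP 1 l.
  have := Hord 1 l l1; rewrite /before ef => H.
  have [H' _] := H4 1 (ltnW n2).
  move: H'; rewrite /before negbK ek0 => H'; have := mem_drop_le fk0 H'; by rewrite (negbTE H).
have el : l = 1 by lia.
rewrite el in ni1.
have := Hord 1 2 isT; rewrite /before => H.
have i1k : i1 < index 2 w.
  rewrite ltnNge; apply/negP => ki.
  have h := @nth_in_drop w (index 2 w) i1; rewrite ki i1s ni1 in h. by rewrite h in H.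
have [_ H'] := H4 2 n2.
move: H'; rewrite /before negbK => H'; have := mem_drop_le i1k H'; by rewrite (negbTE zd).
Qed.

Lemma before_mem a b s t : before a b (s ++ t) -> b \in s -> a \notin t.
Proof.
rewrite /before index_cat => H bs; move: H; rewrite bs drop_cat index_mem bs mem_cat negb_or.
by case/andP.
Qed.

Lemma ordw_suffix s t : ordw (s ++ t) -> ordw t.
Proof. by move=> H a b hab; apply: before_suffix (H a b hab). Qed.

Lemma count_le1 (P : pred nat) r : uniq r ->
  (forall x y, x \in r -> y \in r -> P x -> P y -> x = y) -> count P r <= 1.
Proof.
elim: r => [|x r IH] //= /andP[xr ur] H.
case: (boolP (P x)) => Px /=.
  suff -> : count P r = 0 by [].
  apply/eqP; rewrite -leqn0 leqNgt -has_count; apply/hasP => -[y yr Py].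
  have exy := H x y; rewrite !inE eqxx yr orbT in exy.
  by move: xr; rewrite (exy isT isT Px Py) yr.
by rewrite add0n; apply: IH => // y z yr zr; apply: H; rewrite inE ?yr ?zr orbT.
Qed.

Lemma atmost1 n s t : ordw (s ++ t) ->
  count (fun l => (l \in s) && (l \in t)) (iota 1 n) <= 1.
Proof.
move=> Ho; apply: count_le1; first exact: iota_uniq.
move=> x y; rewrite !mem_iota => /andP[x1 _] /andP[y1 _] /andP[xs xt] /andP[ys yt].
have [xy|yx|//] := ltngtP x y.
  by have := before_mem (Ho x y (introT andP (conj x1 xy))) ys; rewrite xt.
by have := before_mem (Ho y x (introT andP (conj y1 yx))) xs; rewrite yt.
Qed.

Definition multi (sg : nat -> word) (u : word) (l : nat) :=
  1 < count (fun z => l \in sg z) u.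

Lemma count_sub3 (a b c : pred nat) r : (forall x, a x -> b x || c x) ->
  count a r <= count b r + count c r.
Proof.
move=> H; rewrite -count_predUI; apply: leq_trans (leq_addr _ _).
by apply: sub_count => x /H.
Qed.

Lemma count_multi sg u n : ordw (subst sg u) ->
  count (multi sg u) (iota 1 n) <= (size u).-1.
Proof.
elim: u => [|z u IH] Ho.
  by rewrite (@eq_count _ _ pred0) ?count_pred0 // => l; rewrite /multi.
case: u IH Ho => [|z' u'] IH Ho.
  by rewrite (@eq_count _ _ pred0) ?count_pred0 // => l; rewrite /multi /= addn0; case: (l \in sg z).
set u := z' :: u' in IH Ho *.
move: Ho; rewrite subst_cons => Ho.
have Hu := IH (ordw_suffix Ho).
apply: leq_trans (count_sub3 _ (b := fun l => (l \in sg z) && (l \in subst sg u)) (c := multi sg u) _) _.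
  move=> l; rewrite /multi /= mem_subst has_count.
  by case: (l \in sg z) => /=; lia.
apply: leq_trans (leq_add (atmost1 n Ho) Hu) _.
by rewrite /u /=.
Qed.

Lemma count_one (P : pred nat) u : count P u = 1 ->
  exists u1 z u2, [/\ u = u1 ++ z :: u2, P z, ~~ has P u1 & ~~ has P u2].
Proof.
elim: u => [|z u IH] //=.
case: (boolP (P z)) => Pz /=.
  move=> /eqP; rewrite eqSS => /eqP c0.
  exists [::], z, u; split => //; by rewrite has_count c0.
rewrite add0n => /IH [u1 [y [u2 [-> Py h1 h2]]]].
by exists (z :: u1), y, u2; split => //=; rewrite negb_or (negbTE Pz).
Qed.

Lemma good_l sg u n : 0 < n -> size u <= n -> ordw (subst sg u) ->
  (forall l, 0 < l <= n -> l \in subst sg u) ->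
  exists l, 0 < l <= n /\ count (fun z => l \in sg z) u = 1.
Proof.
move=> n0 su Ho Hin.
have := count_multi n Ho.
case: (boolP (all (multi sg u) (iota 1 n))) => [Hall|].
  by rewrite all_count in Hall; rewrite (eqP Hall) size_iota; lia.
rewrite -has_predC => /hasP [l]; rewrite mem_iota /multi /= => hl Hl _.
exists l; split; first by lia.
have := Hin l (ltac:(lia)); rewrite mem_subst has_count; move: Hl; rewrite -leqNgt; move: (count _ u) => c; lia.
Qed.

Definition Hii (m : nat) (S : monoid) := forall d, 0 < d < m.+1 -> forall v : word,
     satisfies S (nseq (m.+1 - d) 0 ++ [:: 1] ++ nseq d 0) v ->
     count_mem 0 v = m.+1.

Lemma subst_nseq0 sg s :
  subst (fun y => nseq (count_mem 0 (sg y)) 0) s = nseq (count_mem 0 (subst sg s)) 0.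
Proof.
elim: s => [|z s IH] //=; by rewrite !subst_cons IH count_cat nseqD.
Qed.

Lemma count0_split (t : word) i : i < size t -> nth 0 t i != 0 ->
  count_mem 0 t = count_mem 0 (take i t) + count_mem 0 (drop i.+1 t).
Proof.
move=> it nz; rewrite -{1}(cat_take_drop i t) count_cat (drop_nth 0 it) /=.
by rewrite (negbTE nz) add0n.
Qed.

Lemma drop_cat_le (n : nat) (s1 s2 : word) : n <= size s1 -> drop n (s1 ++ s2) = drop n s1 ++ s2.
Proof.
rewrite drop_cat leq_eqVlt; case/orP => [/eqP ->|->] //.
by rewrite ltnn subnn drop0 drop_size.
Qed.

Lemma core_count m n S u v sg : 0 < m -> Hii m S -> 1 < n -> size u <= n ->
  satisfies S u v -> Qw m n (subst sg u) -> count_mem 0 (subst sg v) = m.+1.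
Proof.
move=> m0 H2 n1 su Huv [Hc Hin Hord H4].
have [l [hl cl]] := good_l (ltnW n1) su Hord Hin.
have [u1 [z [u2 [Eu lz h1 h2]]]] := count_one cl.
have [i [iw ni zt zd]] := twosided n1 hl Hord H4.
set w := subst sg u in Hc Hin Hord H4 iw ni zt zd.
have l0 : l != 0 by move: hl; rewrite -lt0n => /andP[].
set s1 := subst sg u1. set t := sg z. set s2 := subst sg u2.
have Ew : w = s1 ++ t ++ s2 by rewrite /w Eu subst_cat subst_cons.
have ls1 : l \notin s1 by rewrite mem_subst.
have ls2 : l \notin s2 by rewrite mem_subst.
have i1 : size s1 <= i.
  rewrite leqNgt; apply/negP => H; move: ni; rewrite Ew nth_cat H => E.
  by move: ls1; rewrite -E mem_nth.
have i2 : i < size s1 + size t.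
  rewrite ltnNge; apply/negP => H.
  move: ni; rewrite Ew nth_cat ltnNge i1 /= nth_cat ltnNge.
  have -> : size t <= i - size s1 by szlia.
  move=> /= E.
  move: iw; rewrite Ew !size_cat => iw.
  move: ls2; rewrite -E mem_nth //; clear -H iw; szlia.
set i' := i - size s1. have ei' : i' = i - size s1 by []. clearbody i'.
have i't : i' < size t by rewrite ei'; szlia.
have ni' : nth 0 t i' = l.
  by move: ni; rewrite Ew nth_cat ltnNge i1 /= nth_cat -ei' i't.
have zu1 : z \notin u1.
  by apply/negP => zu; move/hasP: h1; apply; exists z.
have zu2 : z \notin u2.
  by apply/negP => zu; move/hasP: h2; apply; exists z.
pose rho := fun y => if y == z then nseq (count_mem 0 (take i' t)) 0 ++ 1 :: nseq (count_mem 0 (drop i'.+1 t)) 0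
                     else nseq (count_mem 0 (sg y)) 0.
have rho_eq : forall s, z \notin s -> subst rho s = nseq (count_mem 0 (subst sg s)) 0.
  move=> s zs; rewrite -subst_nseq0; apply: eq_in_subst => y ys.
  rewrite /rho; case: eqP => // ey; subst y; by rewrite ys in zs.
have Hrho : subst rho u = nseq (count_mem 0 s1 + count_mem 0 (take i' t)) 0 ++ [:: 1] ++
                         nseq (count_mem 0 (drop i'.+1 t) + count_mem 0 s2) 0.
  rewrite Eu subst_cat subst_cons rho_eq // rho_eq // /rho eqxx !nseqD -!catA //.
have ptake : count_mem 0 (take i w) = count_mem 0 s1 + count_mem 0 (take i' t).
  rewrite Ew take_cat ltnNge i1 /= take_cat -ei' i't count_cat //.
have pdrop : count_mem 0 (drop i.+1 w) = count_mem 0 (drop i'.+1 t) + count_mem 0 s2.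
  have e1 : i.+1 - size s1 = i'.+1 by rewrite ei'; move: i1; move: (size s1) => a; lia.
  rewrite Ew drop_cat ltnNge.
  have -> : size s1 <= i.+1 by move: i1; move: (size s1) => a; lia.
  by rewrite /= e1 drop_cat_le ?count_cat.
set p := count_mem 0 s1 + count_mem 0 (take i' t) in Hrho ptake.
set q := count_mem 0 (drop i'.+1 t) + count_mem 0 s2 in Hrho pdrop.
have p1 : 0 < p by rewrite -ptake -has_count has_pred1.
have q1 : 0 < q by rewrite -pdrop -has_count has_pred1.
have pq : p + q = m.+1.
  rewrite -ptake -pdrop -Hc; apply/esym/count0_split; first by [].
  by rewrite ni.
have Ep : p = m.+1 - q by szlia.
have := H2 q (ltac:(szlia)) (subst rho v).
rewrite -Ep -Hrho => /(_ (sat_subst rho Huv)) <-.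
rewrite !count_subst; congr sumn; apply: eq_map => y.
rewrite /rho; case: eqP => [ey|_]; last by rewrite count_nseq /= mul1n.
subst y; rewrite count_cat /= !count_nseq /= !mul1n add0n.
by rewrite /t (count0_split i't) ?ni' //.
Qed.

Lemma le_max (z : nat) s : z \in s -> z <= foldr maxn 0 s.
Proof.
elim: s => [|y s IH] //=; rewrite inE => /orP[/eqP ->|/IH h].
  by rewrite leq_maxl.
by apply: leq_trans h (leq_maxr _ _).
Qed.

Lemma step_pres m n S u v sg a b : 0 < m -> Hii m S -> Hiii S -> 1 < n ->
  size u + 2 <= n -> satisfies S u v ->
  Qw m n (a ++ subst sg u ++ b) -> Qw m n (a ++ subst sg v ++ b).
Proof.
move=> m0 H2 H3 n1 su Huv [Hc Hin Hord H4].
have Hw : satisfies S (a ++ subst sg u ++ b) (a ++ subst sg v ++ b).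
  by apply: sat_cat (@sat_refl S a) (sat_cat (sat_subst sg Huv) (@sat_refl S b)).
split.
- set A := (foldr maxn 0 (u ++ v)).+1.
  pose sg' := fun z => if z == A then a else if z == A.+1 then b else sg z.
  have Hu' : satisfies S (A :: u ++ [:: A.+1]) (A :: v ++ [:: A.+1]).
    by apply: (sat_cat (@sat_refl S [:: A])) (sat_cat Huv (@sat_refl S [:: A.+1])).
  have eqs : forall s, {subset s <= u ++ v} -> subst sg' (A :: s ++ [:: A.+1]) = a ++ subst sg s ++ b.
    move=> s ss; rewrite subst_cons subst_cat subst_cons /subst /= cats0.
    rewrite /sg' eqxx (gtn_eqF (ltnSn A)) eqxx; congr (_ ++ _ ++ _).
    apply: (eq_in_subst) => z zs; have := le_max (ss z zs); rewrite /sg'.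
    by case: eqP => [->|_]; [rewrite ltnn|case: eqP => [->|_] //; rewrite ltnNge leqW].
  rewrite -eqs; last by move=> z zs; rewrite mem_cat zs orbT.
  apply: (core_count m0 H2 n1 _ Hu'); first by rewrite /= size_cat /= addn1 -addn2.
  rewrite eqs; last by move=> z zs; rewrite mem_cat zs.
  by split.
- move=> l hl; apply: (content H3 (sat_sym Hw)); exact: Hin.
- move=> x y hxy; apply: before_sat H3 _ Hw (Hord x y hxy).
  by case/andP: hxy => _ /ltn_eqF ->.
- move=> l hl; have [h1 h2] := H4 l hl; split.
    apply/negP => h; move/negP: h1; apply; apply: before_sat H3 _ (sat_sym Hw) h.
    by move: hl; rewrite -lt0n => /andP[].
  apply/negP => h; move/negP: h2; apply; apply: before_sat H3 _ (sat_sym Hw) h.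
  by move: hl; rewrite eq_sym -lt0n => /andP[].
Qed.

Lemma ysqS n : ysq n.+1 = ysq n ++ [:: n.+1; n.+1].
Proof. by rewrite /ysq -[n.+1]addn1 iotaD map_cat flatten_cat /= addnC. Qed.

Lemma mem_ysq n c : (c \in ysq n) = (0 < c <= n).
Proof.
elim: n => [|n IH]; first by rewrite /ysq /=; case: c => [|[]].
rewrite ysqS mem_cat IH !inE orbb; lia.
Qed.

Lemma count0_ysq n : count_mem 0 (ysq n) = 0.
Proof. by apply/count_memPn; rewrite mem_ysq. Qed.

Lemma ysq_ord n : ordw (ysq n).
Proof.
elim: n => [|n IH] a b hab; first by apply: beforeNb; rewrite mem_ysq; lia.
have [bn|bn] := leqP b n.
  rewrite ysqS; apply: before_catl; first exact: IH.
  by rewrite !inE orbb; apply/eqP; lia.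
have [eb|nb] := eqVneq b n.+1.
  rewrite ysqS; apply: before_catr; first by rewrite mem_ysq; lia.
  by rewrite /before /= eb eqxx /= !inE orbb; apply/eqP; lia.
by apply: beforeNb; rewrite mem_ysq; lia.
Qed.

Lemma QW m n : 0 < m -> Qw m n (nseq m 0 ++ ysq n ++ [:: 0]).
Proof.
move=> m0; split.
- rewrite !count_cat count_nseq /= count0_ysq; lia.
- by move=> l hl; rewrite !mem_cat mem_ysq hl orbT.
- move=> a b hab; apply: before_catr; first by rewrite mem_nseq; apply/nandP; right; apply/eqP; lia.
  apply: before_catl; first exact: ysq_ord.
  by rewrite inE; apply/eqP; lia.
- move=> l hl; split.
    apply/negP; case: m m0 => // m' _.
    have -> : nseq m'.+1 0 ++ ysq n ++ [:: 0] = [::] ++ 0 :: (nseq m' 0 ++ ysq n ++ [:: 0]) by [].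
    move/before_split; by rewrite !mem_cat mem_ysq hl orbT.
  apply/negP.
  have := mem_ysq n l; rewrite hl => /split_first [X [Y [EY _]]].
  rewrite EY.
  have -> : nseq m 0 ++ (X ++ l :: Y) ++ [:: 0] = (nseq m 0 ++ X) ++ l :: (Y ++ [:: 0]) by rewrite -!catA.
  move/before_split; by rewrite mem_cat inE eqxx orbT.
Qed.

Lemma le_sumn (T : eqType) (f : T -> nat) (e : T) s : e \in s -> f e <= sumn (map f s).
Proof.
elim: s => [|y s IH] //=; rewrite inE => /orP[/eqP ->|/IH h]; first exact: leq_addr.
by apply: leq_trans h (leq_addl _ _).
Qed.

Unset Implicit Arguments.

Theorem theorem7p2 (m : nat) (S : monoid) :
  0 < m ->
  (forall n, 1 < n ->
     satisfies S (nseq m 0 ++ ysq n ++ [:: 0])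
                 (nseq m.+1 0 ++ ysq n ++ [:: 0])) ->
  (forall d, 0 < d < m.+1 -> forall v : word,
     satisfies S (nseq (m.+1 - d) 0 ++ [:: 1] ++ nseq d 0) v ->
     count_mem 0 v = m.+1) ->
  (forall p c, 1 < p -> 1 < c -> forall w : word,
     satisfies S (nseq p 0 ++ nseq c 1) w ->
     exists i j, [/\ 1 < i, 1 < j & w = nseq i 0 ++ nseq j 1]) ->
  non_finitely_based S.
Proof.
move=> m0 Hi H2 H3 [Sig [HS Hd]].
set n := sumn [seq size e.1 + size e.2 | e <- Sig] + 4.
have n1 : 1 < n by rewrite /n; lia.
have key : forall x y, derivable Sig x y -> (Qw m n x <-> Qw m n y).
  move=> x y; elim => {x y} [u|u v _ IH|u v w _ IH1 _ IH2|e sg a b eS].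
  - by [].
  - by split => h; apply/IH.
  - by split => h; [apply/IH2/IH1|apply/IH1/IH2].
  - have se : size e.1 + size e.2 <= sumn [seq size e.1 + size e.2 | e <- Sig].
      exact: (le_sumn (fun e : identity => size e.1 + size e.2)).
    have H := HS e eS.
    have b1 : size e.1 + 2 <= n.
      by move: se; rewrite /n; move: (sumn _) (size e.1) (size e.2) => s0 s1 s2; lia.
    have b2 : size e.2 + 2 <= n.
      by move: se; rewrite /n; move: (sumn _) (size e.1) (size e.2) => s0 s1 s2; lia.
    split; first exact: step_pres m0 H2 H3 n1 b1 H.
    exact: step_pres m0 H2 H3 n1 b2 (sat_sym H).
have := key _ _ (Hd _ _ (Hi n n1)).
case => /(_ (QW n m0)) [+ _ _ _].
rewrite !count_cat !count_nseq /= count0_ysq; lia.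
Qed.
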